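(* Let $M \ge 1$ be a power of $2$ and let $\mathbf{a}, \mathbf{b} \in \mathbb{C}^{M}$ be such that the vector $\begin{bmatrix}\mathbf{a}\\ \mathbf{b}\end{bmatrix} \in \mathbb{C}^{2M}$ is nonzero. Suppose that $\begin{bmatrix}\mathbf{a}\\ \mathbf{b}\end{bmatrix}$ is an eigenvector of $\mathbf{T}_{4M,1}(\mathbf{h})$ for every $\mathbf{h} \in \mathbb{C}^{4M}$. Then for every $\mathbf{g} \in \mathbb{C}^{8M}$, both vectors $$\frac{1}{\sqrt{2}}\begin{bmatrix}\mathbf{a}\\ \mathbf{b}\\ \mathbf{b}\\ -\mathbf{a}\end{bmatrix} \quad\text{and}\quad \frac{1}{\sqrt{2}}\begin{bmatrix}\mathbf{a}\\ \mathbf{b}\\ -\mathbf{b}\\ \mathbf{a}\end{bmatrix} \in \mathbb{C}^{4M}$$ are eigenvectors of $\mathbf{T}_{8M,1}(\mathbf{g})$.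
   Context: For a complex matrix $A$, $A^*$ denotes its entrywise complex conjugate and $A^\dagger$ its conjugate transpose. For $K$ a power of $2$ and $\mathbf{h} = (h_1,\dots,h_{2K})^T \in \mathbb{C}^{2K}$, write $\mathbf{h}_{K,1} = (h_1,\dots,h_K)^T$ and $\mathbf{h}_{K,2} = (h_{K+1},\dots,h_{2K})^T$. The ''equivalent channel'' matrices $\mathcal{E}_{K,1}(\mathbf{h}), \mathcal{E}_{K,2}(\mathbf{h})$ (of size $K \times (K/2)$, for $\mathbf{h} \in \mathbb{C}^K$, $K \ge 2$ a power of $2$) are defined recursively by $$\mathcal{E}_{2,1}(h_1,h_2) = \begin{bmatrix} h_1 \\ h_2^* \end{bmatrix},\qquad \mathcal{E}_{2,2}(h_1,h_2) = \begin{bmatrix} h_2 \\ -h_1^* \end{bmatrix},$$ and, for $\mathbf{h} \in \mathbb{C}^{2K}$, $$\mathcal{E}_{2K,1}(\mathbf{h}) = \begin{bmatrix} \mathcal{E}_{K,1}(\mathbf{h}_{K,1}) & \mathcal{E}_{K,2}(\mathbf{h}_{K,2}) \\ \mathcal{E}_{K,1}^*(\mathbf{h}_{K,2}) & -\mathcal{E}_{K,2}^*(\mathbf{h}_{K,1}) \end{bmatrix},\qquad \mathcal{E}_{2K,2}(\mathbf{h}) = \begin{bmatrix} -\mathcal{E}_{K,2}(\mathbf{h}_{K,1}) & -\mathcal{E}_{K,1}(\mathbf{h}_{K,2}) \\ -\mathcal{E}_{K,2}^*(\mathbf{h}_{K,2}) & \mathcal{E}_{K,1}^*(\mathbf{h}_{K,1})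 \end{bmatrix}.$$ (These arise from the recursively defined linear space-time code $G_1[s]=s_1$, $G_{2K}[\mathbf{s}] = \begin{bmatrix} G_K[\mathbf{s}_{K,1}] & G_K[\mathbf{s}_{K,2}] \\ -G_K[\mathbf{s}_{K,2}^*] & G_K[\mathbf{s}_{K,1}^*]\end{bmatrix}$ by splitting the symbols into two partitions.) For $\mathbf{h} \in \mathbb{C}^K$ define the $(K/2)\times(K/2)$ Hermitian matrix $\mathbf{T}_{K,1}(\mathbf{h}) = \mathcal{E}_{K,1}^\dagger(\mathbf{h})\,\mathcal{E}_{K,1}(\mathbf{h})$. *)

(* Defs.v *)
From HB Require Import structures.
From mathcomp Require Import all_boot all_order all_algebra.
From mathcomp Require Import complex.
From mathcomp Require Import reals.
Set Implicit Arguments. Unset Strict Implicit. Unset Printing Implicit Defensive.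
Import Order.TTheory GRing.Theory Num.Theory.
Local Open Scope ring_scope.

Section Defs.
Variable R : rcfType.
Local Notation C := R[i].

(* Entrywise description of the pair (E_{K,1}(h), E_{K,2}(h)) for K = 2^(k+1),
   with h given as a sequence of coefficients (index n = h_{n+1}),
   matrix entries indexed by (row, column), 0-based. *)
Fixpoint Ef (k : nat) (h : nat -> C) : (nat -> nat -> C) * (nat -> nat -> C) :=
  match k with
  | 0 =>
      ((fun i _ => if i == 0%N then h 0%N else conjc (h 1%N)),
       (fun i _ => if i == 0%N then h 1%N else - conjc (h 0%N)))
  | k'.+1 =>
      let K := (2 ^ k'.+1)%N in
      let L := (2 ^ k')%N in
      let h1 := h in
      let h2 := fun n => h (K + n)%N in
      let A1 := Ef k' h1 in
      let A2 := Ef k' h2 in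
      ((fun i j =>
          if (i < K)%N then
            (if (j < L)%N then A1.1 i j else A2.2 i (j - L)%N)
          else
            (if (j < L)%N then conjc (A2.1 (i - K)%N j)
             else - conjc (A1.2 (i - K)%N (j - L)%N))),
       (fun i j =>
          if (i < K)%N then
            (if (j < L)%N then - A1.2 i j else - A2.1 i (j - L)%N)
          else
            (if (j < L)%N then - conjc (A2.2 (i - K)%N j)
             else conjc (A1.1 (i - K)%N (j - L)%N))))
  end.

(* coefficients of a column vector, as a function on nat (0 outside range) *)
Definition vnat (n : nat) (h : 'cV[C]_n) : nat -> C :=
  fun m => match @insub _ (fun x => (x < n)%N) 'I_n m with
           | Some i => h i 0
           | None => 0
           end.

Definition E1 (k : nat) (h : 'cV[C]_(2 ^ k.+1)) : 'M[C]_(2 ^ k.+1, 2 ^ k) :=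
  \matrix_(i, j) (Ef k (vnat h)).1 i j.
Definition E2 (k : nat) (h : 'cV[C]_(2 ^ k.+1)) : 'M[C]_(2 ^ k.+1, 2 ^ k) :=
  \matrix_(i, j) (Ef k (vnat h)).2 i j.

Definition ctrmx (m n : nat) (A : 'M[C]_(m, n)) : 'M[C]_(n, m) :=
  (map_mx conjc A)^T.

Definition T1 (k : nat) (h : 'cV[C]_(2 ^ k.+1)) : 'M[C]_(2 ^ k) :=
  ctrmx (E1 h) *m E1 h.

Definition eigenvector (n : nat) (A : 'M[C]_n) (v : 'cV[C]_n) : Prop :=
  v != 0 /\ exists lam : C, A *m v = lam *: v.

Lemma dbl_pow2 (m : nat) : (2 ^ m + 2 ^ m = 2 ^ m.+1)%N.
Proof. by rewrite expnS mul2n addnn. Qed.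

Definition stack2 (m : nat) (a b : 'cV[C]_(2 ^ m)) : 'cV[C]_(2 ^ m.+1) :=
  castmx (dbl_pow2 m, erefl 1%N) (col_mx a b).

End Defs.

(* Main.v *)
Require Import Defs.
From HB Require Import structures.
From mathcomp Require Import all_boot all_order all_algebra.
From mathcomp Require Import complex.
From mathcomp Require Import reals.
From mathcomp Require Import zify ring lra.
Import Order.TTheory GRing.Theory Num.Theory.
Local Open Scope ring_scope.

Ltac dec := repeat match goal with
 | |- context [ if (?a < ?b)%N then _ else _ ] =>
     let H := fresh in
     first [ (have H : (a < b)%N by lia); rewrite H; clear H
           | (have H : ~~ (a < b)%N by lia); rewrite (negbTE H); clear H ]
 end.

Section Aux.
Variable R : rcfType.
Local Notation C := R[i].

Lemma cD (x y : C) : conjc (x + y) = conjc x + conjc y. Proof. exact: rmorphD. Qed.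
Lemma cM (x y : C) : conjc (x * y) = conjc x * conjc y. Proof. exact: rmorphM. Qed.
Lemma cN (x : C) : conjc (- x) = - conjc x. Proof. exact: rmorphN. Qed.
Lemma cB (x y : C) : conjc (x - y) = conjc x - conjc y. Proof. exact: rmorphB. Qed.
Lemma c1 : conjc (1 : C) = 1. Proof. exact: rmorph1. Qed.
Lemma c0 : conjc (0 : C) = 0. Proof. exact: rmorph0. Qed.

Lemma Ef1_S k (h : nat -> C) i j : (Ef k.+1 h).1 i j =
  (if (i < 2 ^ k.+1)%N then
     (if (j < 2 ^ k)%N then (Ef k h).1 i j else (Ef k (fun n => h (2 ^ k.+1 + n)%N)).2 i (j - 2 ^ k)%N)
   else
     (if (j < 2 ^ k)%N then conjc ((Ef k (fun n => h (2 ^ k.+1 + n)%N)).1 (i - 2 ^ k.+1)%N j)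
      else - conjc ((Ef k h).2 (i - 2 ^ k.+1)%N (j - 2 ^ k)%N))).
Proof. by []. Qed.

Lemma Ef2_S k (h : nat -> C) i j : (Ef k.+1 h).2 i j =
  (if (i < 2 ^ k.+1)%N then
     (if (j < 2 ^ k)%N then - (Ef k h).2 i j else - (Ef k (fun n => h (2 ^ k.+1 + n)%N)).1 i (j - 2 ^ k)%N)
   else
     (if (j < 2 ^ k)%N then - conjc ((Ef k (fun n => h (2 ^ k.+1 + n)%N)).2 (i - 2 ^ k.+1)%N j)
      else conjc ((Ef k h).1 (i - 2 ^ k.+1)%N (j - 2 ^ k)%N))).
Proof. by []. Qed.

Lemma Ef_combo k (h h1 h2 : nat -> C) (s : C) : conjc s = s ->
  (forall n, (n < 2 ^ k.+1)%N -> h n = h1 n + s * h2 n) ->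
  forall i j, (Ef k h).1 i j = (Ef k h1).1 i j + s * (Ef k h2).1 i j /\
              (Ef k h).2 i j = (Ef k h1).2 i j + s * (Ef k h2).2 i j.
Proof.
move=> hs; elim: k h h1 h2 => [|k IH] h h1 h2 hh i j.
  rewrite /= !hh // !cD !cM hs.
  by split; case: ifP => _; ring.
have hp : (2 ^ k.+2 = 2 ^ k.+1 + 2 ^ k.+1)%N by rewrite dbl_pow2.
have hl1 : forall n, (n < 2^k.+1)%N -> (n < 2^k.+2)%N by move=> n; rewrite hp; lia.
have hl2 : forall n, (n < 2^k.+1)%N -> (2^k.+1 + n < 2^k.+2)%N by move=> n; rewrite hp; lia.
have IH1 := IH h h1 h2 (fun n hn => hh n (hl1 n hn)).
have IH2 := IH (fun n => h (2 ^ k.+1 + n)%N) (fun n => h1 (2 ^ k.+1 + n)%N)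
   (fun n => h2 (2 ^ k.+1 + n)%N) (fun n hn => hh _ (hl2 n hn)).
rewrite !Ef1_S !Ef2_S.
split; case: ifP => _; case: ifP => _;
  rewrite ?(proj1 (IH1 _ _)) ?(proj2 (IH1 _ _)) ?(proj1 (IH2 _ _)) ?(proj2 (IH2 _ _))
          ?cN ?cD ?cM ?hs; ring.
Qed.

Lemma Ef_ext k (h h' : nat -> C) :
  (forall n, (n < 2 ^ k.+1)%N -> h n = h' n) ->
  forall i j, (Ef k h).1 i j = (Ef k h').1 i j /\ (Ef k h).2 i j = (Ef k h').2 i j.
Proof.
move=> hh i j.
have hh' : forall n, (n < 2 ^ k.+1)%N -> h n = h' n + 0 * (fun _ => 0 : C) n.
  by move=> n hn; rewrite hh // mul0r addr0.
have := @Ef_combo k h h' (fun _ => 0) 0 c0 hh' i j.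
by rewrite !mul0r !addr0.
Qed.

Lemma sum_split2 k (F : nat -> C) :
  \sum_(0 <= j < 2 ^ k.+1) F j = \sum_(0 <= j < 2 ^ k) (F j + F (2 ^ k + j)%N).
Proof.
rewrite -dbl_pow2 big_split /= !big_mkord big_split_ord /=.
by congr (_ + _); apply: eq_bigr.
Qed.


Definition mvf n (e : nat -> nat -> C) (x : nat -> C) i := \sum_(0 <= j < n) e i j * x j.
Definition mtvf n (e : nat -> nat -> C) (w : nat -> C) j := \sum_(0 <= i < n) conjc (e i j) * w i.
Definition Xf m (a b : nat -> C) n := if (n < 2^m)%N then a n else b (n - 2^m)%N.
Definition Vf m (s : C) a b n := if (n < 2^m.+1)%N then Xf m a b n else
  if (n - 2^m.+1 < 2^m)%N then s * b (n - 2^m.+1)%N else - (s * a (n - 2^m.+1 - 2^m)%N).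
Definition Uf m (s : C) (g : nat -> C) n := if (n < 2^m.+1)%N then g n + s * g (2^m.+2 + (2^m.+1 + n))%N
  else g n + (- s) * g (2^m.+2 + (n - 2^m.+1))%N.
Definition Pf m (s : C) (w : nat -> C) n :=
  s * (if (n < 2^m.+1)%N then - w (2^m.+1 + n)%N else w (n - 2^m.+1)%N).



Lemma EU1 m s g i j : conjc s = s ->
  (Ef m (Uf m s g)).1 i j = (Ef m g).1 i j + s * (Ef m (fun n => g (2^m.+2 + (2^m.+1 + n)))%N).1 i j /\
  (Ef m (Uf m s g)).2 i j = (Ef m g).2 i j + s * (Ef m (fun n => g (2^m.+2 + (2^m.+1 + n)))%N).2 i j.
Proof. by move=> hs; apply: Ef_combo => // n hn; rewrite /Uf hn. Qed.

Lemma EU2 m s g i j : conjc s = s ->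
  (Ef m (fun n => Uf m s g (2^m.+1 + n)%N)).1 i j = (Ef m (fun n => g (2^m.+1 + n)%N)).1 i j + (- s) * (Ef m (fun n => g (2^m.+2 + n))%N).1 i j /\
  (Ef m (fun n => Uf m s g (2^m.+1 + n)%N)).2 i j = (Ef m (fun n => g (2^m.+1 + n)%N)).2 i j + (- s) * (Ef m (fun n => g (2^m.+2 + n))%N).2 i j.
Proof.
move=> hs; apply: Ef_combo; first by rewrite cN hs.
move=> n hn; rewrite /Uf addKn; dec => //.
Qed.

Lemma lemA m (s : C) g a b (hs : s = 1 \/ s = -1) l : (l < 2^m.+3)%N ->
  mvf (2^m.+2) (Ef m.+2 g).1 (Vf m s a b) l =
  (if (l < 2^m.+2)%N then mvf (2^m.+1) (Ef m.+1 (Uf m s g)).1 (Xf m a b) l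
   else Pf m s (mvf (2^m.+1) (Ef m.+1 (Uf m s g)).1 (Xf m a b)) (l - 2^m.+2)).
Proof.
have p1 : (2^m.+1 = 2*2^m)%N by rewrite expnS.
have p2 : (2^m.+2 = 4*2^m)%N by rewrite !expnS; lia.
have p3 : (2^m.+3 = 8*2^m)%N by rewrite !expnS; lia.
have hs' : conjc s = s by case: hs => ->; rewrite ?cN c1.
move=> hl.
have : exists2 r, (r < 2^m.+1)%N & [\/ l = r, l = (2^m.+1 + r)%N, l = (2^m.+2 + r)%N | l = (2^m.+2 + (2^m.+1 + r))%N].
  case: (ltnP l (2^m.+1)) => h1; first by exists l => //; constructor 1.
  case: (ltnP l (2^m.+2)) => h2; first by exists (l - 2^m.+1)%N; [lia | constructor 2; lia].
  case: (ltnP l (2^m.+2 + 2^m.+1)) => h3; first by exists (l - 2^m.+2)%N; [lia | constructor 3; lia].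
  by exists (l - 2^m.+2 - 2^m.+1)%N; [lia | constructor 4; lia].
case=> r hr hcase.
case: hcase => ->;
  dec; rewrite /Pf ?addKn; dec; rewrite /mvf !sum_split2 ?mulrN ?mulr_sumr -?sumrN;
  apply: eq_big_nat => j /andP [_ hj];
  rewrite /Vf /Xf !(Ef1_S, Ef2_S); dec; rewrite ?addKn; dec;
  rewrite ?(proj1 (EU1 _ _ _ _ _ hs')) ?(proj2 (EU1 _ _ _ _ _ hs')) ?(proj1 (EU2 _ _ _ _ _ hs')) ?(proj2 (EU2 _ _ _ _ _ hs'));
  rewrite ?cN ?cD ?cM ?hs' ?conjcK; case: hs => ->; ring.
Qed.




Lemma lemC m (s : C) g (w : nat -> C) (hs : s = 1 \/ s = -1) c : (c < 2^m.+2)%N ->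
  mtvf (2^m.+3) (Ef m.+2 g).1 (fun l => if (l < 2^m.+2)%N then w l else Pf m s w (l - 2^m.+2)) c =
  Vf m s (mtvf (2^m.+2) (Ef m.+1 (Uf m s g)).1 w)
         (fun n => mtvf (2^m.+2) (Ef m.+1 (Uf m s g)).1 w (2^m + n)) c.
Proof.
have p1 : (2^m.+1 = 2*2^m)%N by rewrite expnS.
have p2 : (2^m.+2 = 4*2^m)%N by rewrite !expnS; lia.
have p3 : (2^m.+3 = 8*2^m)%N by rewrite !expnS; lia.
have hs' : conjc s = s by case: hs => ->; rewrite ?cN c1.
move=> hc.
have : exists2 q, (q < 2^m)%N & [\/ c = q, c = (2^m + q)%N, c = (2^m.+1 + q)%N | c = (2^m.+1 + (2^m + q))%N].
  case: (ltnP c (2^m)) => h1; first by exists c => //; constructor 1.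
  case: (ltnP c (2^m.+1)) => h2; first by exists (c - 2^m)%N; [lia | constructor 2; lia].
  case: (ltnP c (2^m.+1 + 2^m)) => h3; first by exists (c - 2^m.+1)%N; [lia | constructor 3; lia].
  by exists (c - 2^m.+1 - 2^m)%N; [lia | constructor 4; lia].
case=> q hq hcase.
case: hcase => ->;
  rewrite /Vf /Xf; dec; rewrite ?addKn; dec; cbv beta;
  rewrite /mtvf !sum_split2 ?mulrN ?mulr_sumr -?sumrN;
  apply: eq_big_nat => i /andP [_ hi]; cbv beta;
  dec; rewrite /Pf ?addKn; dec;
  rewrite !(Ef1_S, Ef2_S); dec; rewrite ?addKn; dec;
  rewrite ?(proj1 (EU1 _ _ _ _ _ hs')) ?(proj2 (EU1 _ _ _ _ _ hs')) ?(proj1 (EU2 _ _ _ _ _ hs')) ?(proj2 (EU2 _ _ _ _ _ hs'));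
  rewrite ?cN ?cD ?cM ?hs' ?conjcK; case: hs => ->; ring.
Qed.


Lemma vnat_ord n (x : 'cV[C]_n) (i : 'I_n) : vnat x i = x i 0.
Proof.
rewrite /vnat; case: insubP => [j _ hj | ]; last by rewrite ltn_ord.
by rewrite (val_inj hj).
Qed.

Lemma vnat_out n (x : 'cV[C]_n) k : (n <= k)%N -> vnat x k = 0.
Proof. by move=> hk; rewrite /vnat insubN // -leqNgt. Qed.

Lemma vnat_lt {n} (x : 'cV[C]_n) {k} (hk : (k < n)%N) : vnat x k = x (Ordinal hk) 0.
Proof. by rewrite -vnat_ord. Qed.

Lemma vnat_opp n (x : 'cV[C]_n) k : vnat (- x) k = - vnat x k.
Proof.
case: (ltnP k n) => hk; last by rewrite !vnat_out // oppr0.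
by rewrite !(vnat_lt _ hk) mxE.
Qed.

Lemma vnat_col n (f : nat -> C) k : (k < n)%N -> vnat (\col_(i < n) f i) k = f k.
Proof. by move=> hk; rewrite (vnat_lt _ hk) mxE. Qed.

Lemma vnat_stack2 m (a b : 'cV[C]_(2 ^ m)) k :
  vnat (stack2 a b) k = Xf m (vnat a) (vnat b) k.
Proof.
rewrite /Xf; case: (ltnP k (2^m.+1)) => hk; last first.
  rewrite vnat_out // ifF; last by apply/negbTE; rewrite -leqNgt (leq_trans _ hk) // expnS mul2n -addnn leq_addr.
  rewrite vnat_out //; rewrite expnS mul2n -addnn in hk; lia.
rewrite (vnat_lt _ hk) castmxE mxE.
case: splitP => [i1 /= e | i2 /= e].
  by rewrite e ltn_ord vnat_ord [cast_ord _ _]ord1.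
have -> : (k < 2 ^ m)%N = false by rewrite e; apply/negbTE; rewrite -leqNgt leq_addr.
by rewrite e addKn vnat_ord [cast_ord _ _]ord1.
Qed.

Lemma E1_mv k (h : 'cV[C]_(2^k.+1)) (x : 'cV[C]_(2^k)) (i : 'I_(2^k.+1)) :
  (E1 h *m x) i 0 = mvf (2^k) (Ef k (vnat h)).1 (vnat x) i.
Proof. rewrite mxE /mvf big_mkord; apply: eq_bigr => j _; by rewrite mxE vnat_ord. Qed.

Lemma E1t_mv k (h : 'cV[C]_(2^k.+1)) (w : 'cV[C]_(2^k.+1)) (j : 'I_(2^k)) :
  (ctrmx (E1 h) *m w) j 0 = mtvf (2^k.+1) (Ef k (vnat h)).1 (vnat w) j.
Proof. rewrite mxE /mtvf big_mkord; apply: eq_bigr => i _; by rewrite /ctrmx !mxE vnat_ord. Qed.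

End Aux.

Arguments Vf {R}. Arguments Xf {R}. Arguments Uf {R}. Arguments Pf {R}.
Arguments mvf {R}. Arguments mtvf {R}. Arguments vnat_lt {R n} x {k} hk. Arguments vnat_ord {R n}. Arguments vnat_out {R n}.
Arguments vnat_col {R}. Arguments vnat_stack2 {R m}. Arguments E1_mv {R k}. Arguments E1t_mv {R k}.
Arguments lemA {R}. Arguments lemC {R}.



Section Key.
Variable R : rcfType.
Local Notation C := R[i].

Lemma key m (s : C) (hs : s = 1 \/ s = -1) (a b : 'cV[C]_(2^m)) (v : 'cV[C]_(2^m.+2))
  (g : 'cV[C]_(2^m.+3)) (lam : C) :
  (forall k, (k < 2^m.+2)%N -> vnat v k = Vf m s (vnat a) (vnat b) k) ->
  T1 (\col_(i < 2^m.+2) Uf m s (vnat g) i) *m stack2 a b = lam *: stack2 a b ->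
  T1 g *m v = lam *: v.
Proof.
move=> hv; set u := \col_(i < 2^m.+2) _ => hu.
have p1 : (2^m.+1 = 2*2^m)%N by rewrite expnS.
have p2 : (2^m.+2 = 4*2^m)%N by rewrite !expnS; lia.
have p3 : (2^m.+3 = 8*2^m)%N by rewrite !expnS; lia.
set W := mvf (2^m.+1) (Ef m.+1 (Uf m s (vnat g))).1 (Xf m (vnat a) (vnat b)).
set Z := mtvf (2^m.+2) (Ef m.+1 (Uf m s (vnat g))).1 W.
have hEu : forall i j, (Ef m.+1 (vnat u)).1 i j = (Ef m.+1 (Uf m s (vnat g))).1 i j.
  have he : forall n, (n < 2^m.+2)%N -> vnat u n = Uf m s (vnat g) n by move=> n hn; rewrite vnat_col.
  by move=> i j; case: (@Ef_ext R _ _ _ he i j).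
have hZ : forall n, (n < 2^m.+1)%N -> Z n = lam * Xf m (vnat a) (vnat b) n.
  move=> n hn.
  have /matrixP/(_ (Ordinal hn) 0) := hu.
  rewrite /T1 -mulmxA E1t_mv [in RHS]mxE -(vnat_ord (stack2 a b)) vnat_stack2 => <-.
  rewrite /Z /mtvf; apply: eq_big_nat => l /andP [_ hl].
  rewrite hEu (vnat_lt _ hl) E1_mv /W /mvf; congr (_ * _).
  apply: eq_big_nat => j /andP [_ hj]; by rewrite hEu vnat_stack2.
apply/matrixP => i j; rewrite (ord1 j) {j}.
rewrite [in RHS]mxE -(vnat_ord v) (hv _ (ltn_ord i)).
rewrite /T1 -mulmxA E1t_mv.
transitivity (mtvf (2^m.+3) (Ef m.+2 (vnat g)).1
   (fun l => if (l < 2^m.+2)%N then W l else Pf m s W (l - 2^m.+2)) i).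
  rewrite /mtvf; apply: eq_big_nat => l /andP [_ hl]; congr (_ * _).
  rewrite (vnat_lt _ hl) E1_mv /= -lemA //; rewrite /mvf; apply: eq_big_nat => j /andP [_ hj].
  by rewrite hv.
rewrite lemC //.
have hi := ltn_ord i.
rewrite /Vf /Xf; case: ifPn => h1; case: ifPn => h2; rewrite -/Z ?hZ; try lia;
  rewrite /Xf; dec; rewrite ?addKn; ring.
Qed.

End Key.

Arguments vnat_opp {R n}.
Theorem proposition5 (R : realType) (m : nat) (a b : 'cV[R[i]]_(2 ^ m)) :
  stack2 a b != 0 ->
  (forall h : 'cV[R[i]]_(2 ^ m.+2), eigenvector (T1 h) (stack2 a b)) ->
  forall g : 'cV[R[i]]_(2 ^ m.+3),
    eigenvector (T1 g)
      (((Num.sqrt (2 : R))%:C)%C^-1 *: stack2 (stack2 a b) (stack2 b (- a))) /\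
    eigenvector (T1 g)
      (((Num.sqrt (2 : R))%:C)%C^-1 *: stack2 (stack2 a b) (stack2 (- b) a)).
Proof.
move=> hx H g.
set c := ((Num.sqrt (2 : R))%:C)%C^-1.
have c_ne0 : c != 0.
  rewrite /c invr_eq0; apply/eqP => /(congr1 (@complex.Re R)) /= /eqP.
  rewrite sqrtr_eq0 => h; lra.
have gen : forall s : R[i], s = 1 \/ s = -1 -> forall v : 'cV[R[i]]_(2^m.+2),
    (forall k, (k < 2^m.+2)%N -> vnat v k = Vf m s (vnat a) (vnat b) k) ->
    eigenvector (T1 g) (c *: v).
  move=> s hs v hv.
  have [_ [lam hlam]] := H (\col_(i < 2^m.+2) Uf m s (vnat g) i).
  split.
    rewrite scaler_eq0 negb_or c_ne0 /=; apply: contra hx => /eqP v0.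
    apply/eqP/matrixP => i j; rewrite (ord1 j) [RHS]mxE -vnat_ord vnat_stack2.
    have hi : (i < 2^m.+2)%N by apply: (leq_trans (ltn_ord i)); rewrite leq_exp2l.
    rewrite (_ : Xf m _ _ i = vnat v i); last by rewrite hv // /Vf ltn_ord.
    by rewrite v0 (vnat_lt _ hi) mxE.
  exists lam; by rewrite -scalemxAr (@key _ _ _ hs _ _ _ _ _ hv hlam) !scalerA mulrC.
split; apply: gen; [left; done | | right; done | ]; move=> k hk;
  rewrite (@vnat_stack2 _ m.+1) /Xf !(@vnat_stack2 _ m) /Vf /Xf ?vnat_opp; (repeat case: ifP => _); ring.
Qed.
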